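(* Let $G$ be an ordered graph, let $xy\in E(G)$ and $i\in\mathbb N$. If $\mathrm{h}_G(xy)>i$, then there is an edge $xz\in E(G)$ with $\mathrm{h}_G(xz)=i$ and $\mathrm{v}_G(xz)=x$.
   Context: An ordered graph is a finite simple graph $G$ equipped with a total order $\le_G$ on $E(G)$ and a total order $\le^V_G$ on $V(G)$. Let $\mathbb N=\{1,2,\dots\}$. Define $\preceq_{\mathrm{lex}}$ on $\mathbb N\times V(G)$ by $(i,v)\preceq_{\mathrm{lex}}(i',v')$ iff $i<i'$, or $i=i'$ and $v\le^V_G v'$. The height table $\mathrm{HT}(G)$ is a partially filled array indexed by $\mathbb N\times V(G)$, built by going through all $(i,v)$ in $\preceq_{\mathrm{lex}}$-increasing order and setting the entry at $(i,v)$ to be the $\le_G$-largest edge containing $v$ not yet entered into the table (blank if none remain). Every edge is entered exactly once; $\mathrm{ht}_G(e)=(\mathrm{h}_G(e),\mathrm{v}_G(e))$ is the position of $e$, with $\mathrm{h}_G(e)$ its row and $\mathrm{v}_G(e)$ its column. *)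

(* Defs.v *)
From mathcomp Require Import all_boot.
Set Implicit Arguments. Unset Strict Implicit. Unset Printing Implicit Defensive.

Definition is_total_order (A : Type) (D : A -> Prop) (le : rel A) : Prop :=
  (forall x, D x -> le x x) /\
  (forall x y, D x -> D y -> le x y -> le y x -> x = y) /\
  (forall x y z, D x -> D y -> D z -> le x y -> le y z -> le x z) /\
  (forall x y, D x -> D y -> le x y || le y x).

Definition ordered_graph (T : finType) (leV : rel T) (E : {set {set T}})
    (leE : rel {set T}) : Prop :=
  (forall e, e \in E -> #|e| = 2) /\
  is_total_order (fun _ => True) leV /\
  is_total_order (fun e => e \in E) leE.

Section HeightTable.
Variables (T : finType) (leV : rel T) (E : {set {set T}}) (leE : rel {set T}).

Definition vlist : seq T := sort leV (enum T).

Definition choose_edge (R : {set {set T}}) (v : T) : option {set T} :=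
  [pick e in R | (v \in e) && [forall f in R, (v \in f) ==> leE f e]].

Definition chosen_set (R : {set {set T}}) (v : T) : {set {set T}} :=
  if choose_edge R v is Some e then [set e] else set0.

Fixpoint process_row (R : {set {set T}}) (s : seq T) : {set {set T}} :=
  match s with
  | [::] => R
  | v :: s' => process_row (R :\: chosen_set R v) s'
  end.

(* edges not yet entered before row i (rows are numbered 1, 2, ...) *)
Definition rem_row (i : nat) : {set {set T}} :=
  iter i.-1 (fun R => process_row R vlist) E.

Definition rem_at (i : nat) (v : T) : {set {set T}} :=
  process_row (rem_row i) (take (index v vlist) vlist).

(* the entry of HT(G) at position (i, v), for i >= 1 (None = blank) *)
Definition HT_entry (i : nat) (v : T) : option {set T} :=
  choose_edge (rem_at i v) v.

(* ht_G(e) = (i, v), i.e. h_G(e) = i and v_G(e) = v *)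
Definition ht_is (e : {set T}) (i : nat) (v : T) : Prop :=
  0 < i /\ HT_entry i v = Some e.

End HeightTable.

(* Main.v *)
Require Import Defs.
From mathcomp Require Import all_boot.

Set Implicit Arguments. Unset Strict Implicit.
Section Aux.
Variable T : finType.
Variables (leV : rel T) (E : {set {set T}}) (leE : rel {set T}).

Lemma pr_sub (s : seq T) (R : {set {set T}}) : process_row leE R s \subset R.
Proof.
elim: s R => [|v s IH] R /=; first exact: subxx.
apply: subset_trans (IH _) _; exact: subsetDl.
Qed.

Lemma pr_cat (s1 s2 : seq T) (R : {set {set T}}) :
  process_row leE R (s1 ++ s2) = process_row leE (process_row leE R s1) s2.
Proof. by elim: s1 R => [|v s IH] R //=. Qed.

Let f := fun R => process_row leE R (vlist leV).

Lemma iter_mono (n m : nat) : n <= m -> iter m f E \subset iter n f E.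
Proof.
elim: m => [|m IH]; first by rewrite leqn0 => /eqP ->; exact: subxx.
rewrite leq_eqVlt => /orP [/eqP -> | ]; first exact: subxx.
rewrite ltnS => /IH H; apply: subset_trans H; rewrite iterS; exact: pr_sub.
Qed.

Lemma iter_subE n : iter n f E \subset E.
Proof. by have := @iter_mono 0 n (leq0n n). Qed.

Lemma max_exists (s : seq {set T}) a :
  is_total_order (fun e => e \in E) leE -> a \in s -> {subset s <= E} ->
  exists2 m, m \in s & forall g, g \in s -> leE g m.
Proof.
move=> [refl [_ [trans tot]]].
elim: s a => [|b s IH] a //= _ sub.
have bE : b \in E by apply: sub; rewrite inE eqxx.
have subs : {subset s <= E} by move=> g gs; apply: sub; rewrite inE gs orbT.
case: s IH subs sub => [|c s] IH subs sub.
  exists b; first by rewrite inE eqxx.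
  by move=> g; rewrite inE => /eqP ->; apply: refl.
have [m ms mmax] := IH c (mem_head _ _) subs.
have mE := subs m ms.
case Hbm: (leE b m).
  exists m; first by rewrite inE ms orbT.
  by move=> g; rewrite inE => /orP [/eqP -> // | /mmax].
have Hmb : leE m b by move: (tot _ _ bE mE); rewrite Hbm.
exists b; first by rewrite inE eqxx.
move=> g; rewrite inE => /orP [/eqP -> | gs]; first exact: refl.
exact: (trans _ _ _ (subs _ gs) mE bE (mmax _ gs) Hmb).
Qed.

End Aux.

Theorem mainTheorem13 (T : finType) (leV : rel T) (E : {set {set T}})
    (leE : rel {set T}) (x y : T) (i hxy : nat) (vxy : T) :
  ordered_graph leV E leE ->
  [set x; y] \in E ->
  0 < i ->
  ht_is leV E leE [set x; y] hxy vxy ->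
  i < hxy ->
  exists z : T, [set x; z] \in E /\ ht_is leV E leE [set x; z] i x.
Proof.
move=> [card2 [_ totE]] _ i0 [h0 Hent] ihxy.
set R := rem_at leV E leE i x.
have RE : R \subset E.
  rewrite /R /rem_at; exact: (subset_trans (pr_sub leE _ _) (iter_subE leV E leE i.-1)).
have eR : [set x; y] \in R.
  move: Hent; rewrite /HT_entry /choose_edge.
  case: pickP => // e /andP [eR' _] [<-].
  have S1 : rem_at leV E leE hxy vxy \subset rem_row leV E leE hxy.
    exact: pr_sub.
  have S2 : rem_row leV E leE hxy \subset rem_row leV E leE i.+1.
    apply: iter_mono; rewrite /=; by case: hxy ihxy {S1 eR' h0}.
  have S3 : rem_row leV E leE i.+1 \subset R.
    rewrite /R /rem_at /rem_row /=; case: (i) i0 => [//|i'] _ /=.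
    rewrite -[X in process_row _ _ X](cat_take_drop (index x (vlist leV))).
    rewrite pr_cat; exact: pr_sub.
  exact: (subsetP S3 _ (subsetP S2 _ (subsetP S1 _ eR'))).
have a1 : [set x; y] \in [seq g : {set T} <- enum R | x \in g].
  by rewrite mem_filter set21 mem_enum eR.
have a2 : {subset [seq g : {set T} <- enum R | x \in g] <= E}.
  by move=> g; rewrite mem_filter mem_enum => /andP [_ gR]; exact: (subsetP RE).
have [m mR mmax] := @max_exists T E leE _ _ totE a1 a2.
move: mR; rewrite mem_filter mem_enum => /andP [xm mR].
have : choose_edge leE R x != None.
  rewrite /choose_edge; case: pickP => // /(_ m).
  rewrite mR xm /= => /negbT/negP H; exfalso; apply: H; apply/forall_inP => g gR; apply/implyP => xg.
  by apply: mmax; rewrite mem_filter xg mem_enum gR.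
case Hc: (choose_edge leE R x) => [e|] // _.
have := Hc; rewrite /choose_edge; case: pickP => // e' /andP [e'R /andP [xe' _]] [Ee].
subst e'.
have e'E : e \in E := subsetP RE _ e'R.
have c2 := card2 _ e'E.
have : #|e :\ x| == 1 by move: c2; rewrite (cardsD1 x e) xe' add1n => -[->].
move/cards1P => [z Hz].
have He' : e = [set x; z] by rewrite -Hz setD1K.
exists z; rewrite -He'; split => //; split => //.
Qed.
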